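(* For an integer $n\geq 0$ and $z\in\mathbb{C}$, let $$\mathcal{T}_n(z) := \sum_{m=0}^n \binom{n}{m} m^m\,(n-m+z)^{n-m}$$ (with $0^0\equiv 1$). Then $$\mathcal{T}_n(z) = \sum_{k=0}^n a_k\, (z+ n +1)^k, \qquad a_k = \binom{n}{k}\,\mathcal{T}_{n-k}(k-n-1) = \binom{n}{k}\, d_{n-k},$$ where $d_j := \mathcal{T}_j(-j-1)$ for integers $j\geq 0$.
   Context: Convention: $0^0\equiv1$. The numbers $d_j=\mathcal{T}_j(-j-1)$ are the values of $\mathcal{T}_j$ at $-j-1$. *)

(* Defs.v *)
From mathcomp Require Import all_boot all_order all_algebra.
Set Implicit Arguments. Unset Strict Implicit. Unset Printing Implicit Defensive.
Import Order.TTheory GRing.Theory Num.Theory.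
Local Open Scope ring_scope.

(* T_n(z) = sum_{m=0}^n C(n,m) m^m (n-m+z)^(n-m), with 0^0 = 1
   (automatic: x ^+ 0 = 1 in MathComp). *)
Definition calT (R : numClosedFieldType) (n : nat) (z : R) : R :=
  \sum_(0 <= m < n.+1) ('C(n, m))%:R * (m%:R) ^+ m * ((n - m)%:R + z) ^+ (n - m).

Definition dval (R : numClosedFieldType) (j : nat) : R :=
  calT j (- (j%:R) - 1).

(* Main.v *)
Require Import Defs.
From mathcomp Require Import all_boot all_order all_algebra.
From mathcomp Require Import ring zify.
From Stdlib Require Import Lia.
Import Order.TTheory GRing.Theory Num.Theory.
Local Open Scope ring_scope.

Lemma binC2 n m k : ('C(n, m) * 'C(n - m, k) = 'C(n, k) * 'C(n - k, m))%N.
Proof.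
case: (leqP (m + k) n) => h; last first.
  case: (leqP m n) => hm; last by rewrite (bin_small (n := n)) // mul0n (bin_small (n := n - k)) ?muln0 //; lia.
  rewrite (bin_small (n := n - m)); last lia.
  case: (leqP k n) => hk; last by rewrite (bin_small (n := n) (m := k)) // mul0n muln0.
  by rewrite (bin_small (n := n - k)) ?muln0 //; lia.
have fpos : (0 < m`! * k`! * (n - m - k)`!)%N by rewrite !muln_gt0 !fact_gt0.
apply/eqP; rewrite -(eqn_pmul2r fpos); apply/eqP.
have e1 : ('C(n, m) * 'C(n - m, k) * (m`! * k`! * (n - m - k)`!) = n`!)%N.
  rewrite -[RHS](bin_fact (m := m)); last lia.
  rewrite -(bin_fact (n := n - m) (m := k)); last lia.
  ring.
have e2 : ('C(n, k) * 'C(n - k, m) * (m`! * k`! * (n - m - k)`!) = n`!)%N.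
  rewrite -[RHS](bin_fact (m := k)); last lia.
  rewrite -(bin_fact (n := n - k) (m := m)); last lia.
  have -> : (n - k - m = n - m - k)%N by lia.
  ring.
by rewrite e1 e2.
Qed.

Lemma ext_sum (R : nmodType) (N n : nat) (F : nat -> R) : (N <= n)%N ->
  (forall i, (N < i)%N -> F i = 0) ->
  \sum_(0 <= i < N.+1) F i = \sum_(0 <= i < n.+1) F i.
Proof.
move=> hN hF; rewrite (@big_cat_nat _ _ _ N.+1 0 n.+1) //.
suff -> : \sum_(N.+1 <= i < n.+1) F i = 0 by rewrite Monoid.mulm1.
rewrite big_nat_cond big1 // => i /andP[/andP[hi _] _].
exact: hF.
Qed.

Theorem proposition4 (R : numClosedFieldType) (n : nat) (z : R) :
  calT n z =
    \sum_(0 <= k < n.+1) ('C(n, k))%:R * calT (n - k) (k%:R - n%:R - 1)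
                          * (z + n%:R + 1) ^+ k
  /\ (forall k : nat, (k <= n)%N ->
        ('C(n, k))%:R * calT (n - k) (k%:R - n%:R - 1) = ('C(n, k))%:R * dval R (n - k)).
Proof.
split; last first.
  move=> k hk; rewrite /dval natrB //; congr (_ * calT _ _); ring.
set w := z + n%:R + 1.
rewrite /calT.
transitivity (\sum_(0 <= m < n.+1) \sum_(0 <= k < n.+1)
   ('C(n, m))%:R * (m%:R) ^+ m *
     (((- (m%:R + 1)) ^+ (n - m - k) * w ^+ k) *+ 'C(n - m, k)) : R).
  apply: eq_big_nat => m hm.
  rewrite -(@ext_sum _ (n - m) n); [|lia| by move=> i hi; rewrite (bin_small (n := n - m)) ?mulr0n ?mulr0 //; lia].
  have -> : (n - m)%:R + z = - (m%:R + 1) + w.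
    rewrite /w natrB; last lia.
    ring.
  rewrite exprDn big_distrr big_mkord; apply: eq_bigr => i _.
  by [].
rewrite exchange_big_nat; apply: eq_big_nat => k hk.
rewrite big_distrr big_distrl /=.
rewrite [RHS](@ext_sum _ (n - k) n); last 2 first.
- lia.
- move=> i hi; rewrite (bin_small (n := n - k)) ?mul0r ?mulr0 ?mul0r //.
apply: eq_big_nat => m hm.
case: (leqP (m + k) n) => h.
  have h1 : (m <= n - k)%N by lia.
  have h2 : (k <= n)%N by lia.
  have -> : (n - k - m)%:R + (k%:R - n%:R - 1) = - (m%:R + 1) :> R.
    by rewrite (natrB _ h1) (natrB _ h2); ring.
  have -> : (n - k - m = n - m - k)%N by lia.
  rewrite -mulr_natr.
  transitivity (('C(n, m) * 'C(n - m, k))%:R * m%:R ^+ m *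
     ((- (m%:R + 1)) ^+ (n - m - k) * w ^+ k) : R).
    rewrite natrM; ring.
  rewrite binC2 natrM; ring.
rewrite (bin_small (n := n - m)); last lia.
rewrite (bin_small (n := n - k)); last lia.
by rewrite mulr0n !(mulr0, mul0r).
Qed.
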